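(* Let $X_d=X^{\otimes d}$ and suppose $\lambda^X_k/\Lambda^X\sim\beta/(k(\ln k)(\ln\ln k)^{1+s})$ as $k\to\infty$, with $\beta>0$ and $s>0$. Then $$\ln\ln n^{X_d}(\varepsilon)\sim\Bigl(\frac{\beta d}{s\,|\ln(1-\varepsilon^2)|}\Bigr)^{1/s},\quad d\to\infty,\quad\text{for all }\varepsilon\in(0,1).$$
   Context: Let $X$ be a centered random element of a separable Hilbert space $H$ with $\mathbb E\|X\|^2<\infty$, covariance eigenvalues $\lambda^X_1\ge\lambda^X_2\ge\dots\ge0$ (with multiplicity), $\lambda^X_1>0$, trace $\Lambda^X$, and $\bar\lambda^X_k=\lambda^X_k/\Lambda^X$. $X_d=X^{\otimes d}$ is the centered random element of $H^{\otimes d}$ with covariance operator $(K^X)^{\otimes d}$; its eigenvalues are $\prod_{j=1}^d\lambda^X_{k_j}$. With $\bar\lambda^{X_d}_k$ the normalized nonincreasing eigenvalues of $X_d$, $n^{X_d}(\varepsilon)=\min\{n\in\mathbb N:\sum_{k>n}\bar\lambda^{X_d}_k\le\varepsilon^2\}$. *)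

(* Defs.v *)
From Stdlib Require Import Reals List.
Import ListNotations.
Open Scope R_scope.

(* Eigenvalues are indexed from 1: lam k for k >= 1 is lambda^X_k (lam 0 unused). *)

Definition valid_index (d : nat) (t : list nat) : Prop :=
  length t = d /\ Forall (fun k => (1 <= k)%nat) t.

(* Normalized eigenvalue of X_d attached to the multi-index t:
   prod_j lambda_{k_j} / (Lambda^X)^d = prod_j (lambda_{k_j} / Lambda^X). *)
Definition tensor_eig (lam : nat -> R) (Lam : R) (t : list nat) : R :=
  fold_right (fun k acc => (lam k / Lam) * acc) 1 t.

(* mu (1-based) is the nonincreasing enumeration, with multiplicity, of the
   normalized eigenvalues of X_d: there is a bijection sigma from {k >= 1}
   onto the valid multi-indices with mu k = tensor_eig (sigma k), and mu is
   nonincreasing. *)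
Definition sorted_tensor_eig (lam : nat -> R) (Lam : R) (d : nat)
    (mu : nat -> R) : Prop :=
  exists sigma : nat -> list nat,
    (forall k, (1 <= k)%nat -> valid_index d (sigma k)) /\
    (forall k l, (1 <= k)%nat -> (1 <= l)%nat -> sigma k = sigma l -> k = l) /\
    (forall t, valid_index d t -> exists k, (1 <= k)%nat /\ sigma k = t) /\
    (forall k, (1 <= k)%nat -> mu k = tensor_eig lam Lam (sigma k)) /\
    (forall k, (1 <= k)%nat -> mu (S k) <= mu k).

Definition tail_le (mu : nat -> R) (n : nat) (eps : R) : Prop :=
  exists T, infinite_sum (fun j => mu (n + 1 + j)%nat) T /\ T <= eps ^ 2.

Definition is_nX (lam : nat -> R) (Lam : R) (d : nat) (eps : R) (n : nat) : Prop :=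
  exists mu, sorted_tensor_eig lam Lam d mu /\
    tail_le mu n eps /\ (forall m, tail_le mu m eps -> (n <= m)%nat).

(* Main.v *)
Require Import Defs.
From Stdlib Require Import Reals List Lra Lia.
Import ListNotations.
Open Scope R_scope.

Definition sumL {X : Type} (f : X -> R) (l : list X) : R :=
  fold_right (fun x acc => f x + acc) 0 l.

Lemma sumL_app {X} (f : X -> R) l1 l2 : sumL f (l1 ++ l2) = sumL f l1 + sumL f l2.
Proof. induction l1; simpl; [lra|]. rewrite IHl1; lra. Qed.

Lemma sumL_map {X Y} (f : Y -> R) (g : X -> Y) l : sumL f (map g l) = sumL (fun x => f (g x)) l.
Proof. induction l; simpl; congruence. Qed.

Lemma sumL_scal {X} (f : X -> R) c l : sumL (fun x => c * f x) l = c * sumL f l.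
Proof. induction l; simpl; [lra|]. rewrite IHl; lra. Qed.

Lemma sumL_nonneg {X} (f : X -> R) l : (forall x, In x l -> 0 <= f x) -> 0 <= sumL f l.
Proof. induction l; simpl; intros H; [lra|]. 
  assert (0 <= f a) by auto. assert (0 <= sumL f l) by auto. lra. Qed.

Lemma sumL_le {X} (f g : X -> R) l : (forall x, In x l -> f x <= g x) -> sumL f l <= sumL g l.
Proof. induction l; simpl; intros H; [lra|].
  assert (f a <= g a) by auto. assert (sumL f l <= sumL g l) by auto. lra. Qed.

Lemma sumL_ext {X} (f g : X -> R) l : (forall x, In x l -> f x = g x) -> sumL f l = sumL g l.
Proof. induction l; simpl; intros H; [lra|].
  rewrite (H a (or_introl eq_refl)), IHl; auto. Qed.

Lemma sumL_le_incl {X} (f : X -> R) (A : list X) : forall B,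
  NoDup A -> incl A B -> (forall x, In x B -> 0 <= f x) -> sumL f A <= sumL f B.
Proof.
  induction A as [|a A IH]; intros B HA HI Hf; simpl.
  - apply sumL_nonneg; auto.
  - assert (Ha : In a B) by (apply HI; left; auto).
    destruct (in_split _ _ Ha) as [B1 [B2 ->]].
    inversion HA; subst.
    assert (sumL f A <= sumL f (B1 ++ B2)).
    { apply IH; auto.
      - intros x Hx. assert (In x (B1 ++ a :: B2)) by (apply HI; right; auto).
        apply in_app_or in H. apply in_or_app. destruct H as [H|[H|H]]; auto.
        subst; contradiction.
      - intros x Hx; apply Hf. apply in_app_or in Hx; apply in_or_app; simpl; tauto. }
    rewrite !sumL_app in *; simpl. lra.
Qed.

Fixpoint box (d m : nat) : list (list nat) :=
  match d with
  | O => [[]]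
  | S d' => flat_map (fun k => map (cons k) (box d' m)) (seq 1 m)
  end.

Lemma In_box d m t : In t (box d m) <-> (length t = d /\ Forall (fun k => 1 <= k <= m)%nat t).
Proof.
  revert t; induction d; intros t; simpl.
  - split.
    + intros [<-|[]]; split; auto.
    + intros [Hl _]; destruct t; [left; auto| simpl in Hl; lia].
  - rewrite in_flat_map. split.
    + intros [k [Hk Ht]]. apply in_map_iff in Ht. destruct Ht as [t' [<- Ht']].
      apply IHd in Ht'. destruct Ht' as [Hl Hf]. apply in_seq in Hk.
      simpl; split; [lia|]. constructor; auto; lia.
    + intros [Hl Hf]. destruct t as [|k t']; simpl in Hl; [lia|].
      inversion Hf; subst. exists k; split; [apply in_seq; lia|].
      apply in_map. apply IHd; split; auto.
Qed.

Lemma NoDup_flat_cons (B : list (list nat)) : forall l,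
  NoDup B -> NoDup l -> NoDup (flat_map (fun k => map (cons k) B) l).
Proof.
  induction l as [|a l IH]; intros HB Hl; simpl; [constructor|].
  inversion Hl; subst. apply NoDup_app.
  - apply NoDup_map_NoDup_ForallPairs; auto. intros x y _ _ H; inversion H; auto.
  - apply IH; auto.
  - intros t G1 G2. apply in_map_iff in G1. destruct G1 as [x [<- _]].
    apply in_flat_map in G2. destruct G2 as [k [Hk G2]]. apply in_map_iff in G2.
    destruct G2 as [y [Hy _]]. inversion Hy; subst. contradiction.
Qed.

Lemma NoDup_box d m : NoDup (box d m).
Proof. induction d; simpl. - repeat constructor; simpl; tauto.
  - apply NoDup_flat_cons; auto. apply seq_NoDup. Qed.

Lemma length_flat_cons (B : list (list nat)) l :
  length (flat_map (fun k => map (cons k) B) l) = (length l * length B)%nat.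
Proof. induction l; simpl; auto. rewrite length_app, length_map, IHl; lia. Qed.

Lemma length_box d m : length (box d m) = (m ^ d)%nat.
Proof. induction d; simpl; auto. rewrite length_flat_cons, IHd, length_seq; lia. Qed.

Lemma sum_flat_cons (lam : nat -> R) Lam (B : list (list nat)) l :
  sumL (tensor_eig lam Lam) (flat_map (fun k => map (cons k) B) l)
  = sumL (fun k => lam k / Lam) l * sumL (tensor_eig lam Lam) B.
Proof. induction l; simpl; [lra|]. rewrite sumL_app, IHl, sumL_map.
  simpl. rewrite sumL_scal. lra. Qed.

Lemma sum_box lam Lam d m :
  sumL (tensor_eig lam Lam) (box d m) = (sumL (fun k => lam k / Lam) (seq 1 m)) ^ d.
Proof. induction d; simpl. - unfold tensor_eig; simpl; lra.
  - rewrite sum_flat_cons, IHd. lra. Qed.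

Definition valid1 (t : list nat) := Forall (fun k => (1 <= k)%nat) t.

Lemma w_nonneg lam Lam (Hp0 : forall k, (1 <= k)%nat -> 0 <= lam k / Lam) t :
  valid1 t -> 0 <= tensor_eig lam Lam t.
Proof. induction t; intros H; unfold tensor_eig; simpl; [lra|].
  inversion H; subst. fold (tensor_eig lam Lam t).
  apply Rmult_le_pos; auto. Qed.

Lemma w_le1 lam Lam (Hp0 : forall k, (1 <= k)%nat -> 0 <= lam k / Lam)
  (Hp1 : forall k, (1 <= k)%nat -> lam k / Lam <= 1) t :
  valid1 t -> tensor_eig lam Lam t <= 1.
Proof. induction t; intros H; unfold tensor_eig; simpl; [lra|].
  inversion H; subst. fold (tensor_eig lam Lam t).
  pose proof (w_nonneg lam Lam Hp0 t H3).
  assert (lam a / Lam <= 1) by auto. assert (0 <= lam a / Lam) by auto.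
  assert (tensor_eig lam Lam t <= 1) by auto. nra. Qed.

Lemma w_bound lam Lam (Hp0 : forall k, (1 <= k)%nat -> 0 <= lam k / Lam)
  (Hp1 : forall k, (1 <= k)%nat -> lam k / Lam <= 1)
  (Hpm : forall a b, (1 <= a <= b)%nat -> lam b / Lam <= lam a / Lam) M t :
  valid1 t -> Forall (fun k => k <= M)%nat t \/ tensor_eig lam Lam t <= lam (S M) / Lam.
Proof.
  induction t as [|k t IH]; intros H; [left; constructor|].
  inversion H; subst. unfold tensor_eig; simpl; fold (tensor_eig lam Lam t).
  pose proof (w_nonneg lam Lam Hp0 t H3). pose proof (w_le1 lam Lam Hp0 Hp1 t H3).
  assert (0 <= lam k / Lam) by auto. assert (lam k / Lam <= 1) by auto.
  destruct (Compare_dec.le_lt_dec k M).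
  - destruct (IH H3) as [HF|HB]; [left; constructor; auto|right].
    nra.
  - right. assert (lam k / Lam <= lam (S M) / Lam) by (apply Hpm; lia).
    assert (0 <= lam (S M) / Lam) by (apply Hp0; lia). nra.
Qed.

Lemma valid_box d m t : In t (box d m) -> valid1 t.
Proof. intros H; apply In_box in H. destruct H as [_ H].
  unfold valid1; rewrite Forall_forall in *; intros x Hx; apply H in Hx; lia. Qed.

Lemma box_cover d (L : list (list nat)) :
  (forall t, In t L -> valid_index d t) -> exists m, incl L (box d m).
Proof.
  intros HL. exists (list_max (concat L)). intros t Ht.
  destruct (HL t Ht) as [Hl Hv]. apply In_box. split; auto.
  rewrite Forall_forall in *. intros x Hx. split; [apply Hv; auto|].
  assert (Forall (fun k => k <= list_max (concat L))%nat (concat L)) by (apply list_max_le; lia).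
  rewrite Forall_forall in H. apply H. apply in_concat. eauto.
Qed.

Definition Ssum (mu : nat -> R) n := sumL mu (seq 1 n).

Lemma Ssum_S mu n : Ssum mu (S n) = Ssum mu n + mu (S n).
Proof. unfold Ssum. rewrite seq_S, sumL_app. simpl. replace (1 + n)%nat with (S n) by lia. lra. Qed.

Lemma sum_f_sumL (g : nat -> R) a k : sum_f_R0 (fun j => g (a + j)%nat) k = sumL g (seq a (S k)).
Proof. induction k.
  - simpl. rewrite Nat.add_0_r; lra.
  - change (sum_f_R0 (fun j => g (a+j)%nat) (S k)) with (sum_f_R0 (fun j => g (a+j)%nat) k + g (a + S k)%nat).
    rewrite IHk. rewrite (seq_S (S k) a). rewrite sumL_app. simpl. lra. Qed.

Lemma Ssum_split mu n k : Ssum mu (n + k) = Ssum mu n + sumL mu (seq (S n) k).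
Proof. unfold Ssum. rewrite seq_app, sumL_app. reflexivity. Qed.

Lemma pow_bern x d : 0 <= x <= 1 -> 1 - INR d * (1 - x) <= x ^ d.
Proof. intros Hx. induction d; [simpl; lra|].
  rewrite S_INR. simpl. assert (0 <= x ^ d) by (apply pow_le; lra).
  assert (x ^ d <= 1) by (rewrite <- (pow1 d); apply pow_incr; lra).
  assert (0 <= INR d) by apply pos_INR. nra. Qed.

Definition Pm lam Lam m := sumL (fun k => lam k / Lam) (seq 1 m).

Definition pgood lam Lam :=
  (forall k, (1 <= k)%nat -> 0 <= lam k / Lam) /\
  (forall k, (1 <= k)%nat -> lam k / Lam <= 1) /\
  (forall a b, (1 <= a <= b)%nat -> lam b / Lam <= lam a / Lam) /\
  (forall m, Pm lam Lam m <= 1) /\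
  (forall e, 0 < e -> exists m, 1 - e < Pm lam Lam m).

Section S.
Variables (lam : nat -> R) (Lam : R) (d : nat) (mu : nat -> R).
Hypothesis (Hg : pgood lam Lam) (Hs : sorted_tensor_eig lam Lam d mu).

Lemma Pm_nonneg m : 0 <= Pm lam Lam m.
Proof. destruct Hg as [Hp0 _]. apply sumL_nonneg. intros x Hx. apply in_seq in Hx. apply Hp0; lia. Qed.

Lemma mu_nonneg k : (1 <= k)%nat -> 0 <= mu k.
Proof. destruct Hg as [Hp0 _]. destruct Hs as [sg [Hv [Hi [Hsu [Hm Hmo]]]]].
  intros Hk. rewrite Hm by auto. apply w_nonneg; auto. apply Hv; auto. Qed.

Lemma Ssum_mono n k : Ssum mu n <= Ssum mu (n + k).
Proof. rewrite Ssum_split. assert (0 <= sumL mu (seq (S n) k)); [|lra].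
  apply sumL_nonneg. intros x Hx; apply in_seq in Hx; apply mu_nonneg; lia. Qed.

Lemma Ssum_le1 K : Ssum mu K <= 1.
Proof.
  destruct Hg as [Hp0 [Hp1 [Hpm [HP1 HPl]]]]. destruct Hs as [sg [Hv [Hi [Hsu [Hm Hmo]]]]].
  set (L := map sg (seq 1 K)).
  assert (HL : forall t, In t L -> valid_index d t).
  { intros t Ht. apply in_map_iff in Ht. destruct Ht as [k [<- Hk]]. apply in_seq in Hk. apply Hv; lia. }
  destruct (box_cover d L HL) as [m Hm'].
  assert (E : Ssum mu K = sumL (tensor_eig lam Lam) L).
  { unfold Ssum, L. rewrite sumL_map. apply sumL_ext. intros x Hx; apply in_seq in Hx. apply Hm; lia. }
  rewrite E. eapply Rle_trans. apply sumL_le_incl; eauto.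
  - apply NoDup_map_NoDup_ForallPairs; [|apply seq_NoDup].
    intros x y Hx Hy Hxy. apply in_seq in Hx, Hy. apply Hi; auto; lia.
  - intros x Hx. apply w_nonneg; auto. eapply valid_box; eauto.
  - rewrite sum_box. rewrite <- (pow1 d). apply pow_incr. split; [apply Pm_nonneg|apply HP1].
Qed.

Lemma Ssum_lower m : exists K, Pm lam Lam m ^ d <= Ssum mu K.
Proof.
  destruct Hg as [Hp0 [Hp1 [Hpm [HP1 HPl]]]]. destruct Hs as [sg [Hv [Hi [Hsu [Hm Hmo]]]]].
  assert (Hc : forall B : list (list nat), (forall t, In t B -> valid_index d t) ->
     exists K, forall t, In t B -> exists k, (1 <= k <= K)%nat /\ sg k = t).
  { induction B as [|b B IH]; intros HB. - exists O; intros t [].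
    - destruct IH as [K HK]. intros; apply HB; right; auto.
      destruct (Hsu b) as [k [Hk1 Hk2]]. apply HB; left; auto.
      exists (Nat.max K k). intros t [<-|Ht]. exists k; split; auto; lia.
      destruct (HK t Ht) as [j [Hj1 Hj2]]. exists j; split; auto; lia. }
  destruct (Hc (box d m)) as [K HK].
  { intros t Ht. apply In_box in Ht. destruct Ht as [Hl Hf]. split; auto.
    rewrite Forall_forall in *. intros x Hx. apply Hf in Hx; lia. }
  exists K. unfold Pm. rewrite <- sum_box.
  assert (E : Ssum mu K = sumL (tensor_eig lam Lam) (map sg (seq 1 K))).
  { unfold Ssum. rewrite sumL_map. apply sumL_ext. intros x Hx; apply in_seq in Hx. apply Hm; lia. }
  rewrite E. apply sumL_le_incl. apply NoDup_box.
  - intros t Ht. destruct (HK t Ht) as [k [Hk1 Hk2]]. apply in_map_iff. exists k; split; auto.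
    apply in_seq; lia.
  - intros t Ht. apply in_map_iff in Ht. destruct Ht as [k [<- Hk]]. apply in_seq in Hk.
    apply w_nonneg; auto. apply Hv; lia.
Qed.

Lemma Ssum_total e : 0 < e -> exists K, forall n, (K <= n)%nat -> 1 - e < Ssum mu n.
Proof.
  intros He. destruct Hg as [Hp0 [Hp1 [Hpm [HP1 HPl]]]].
  assert (Hd : 0 < INR d + 1) by (pose proof (pos_INR d); lra).
  destruct (HPl (e / (INR d + 1))) as [m Hm]. apply Rdiv_lt_0_compat; lra.
  destruct (Ssum_lower m) as [K HK]. exists K. intros n Hn.
  replace n with (K + (n - K))%nat by lia. eapply Rlt_le_trans; [|apply Ssum_mono].
  eapply Rlt_le_trans; [|apply HK].
  eapply Rlt_le_trans; [|apply pow_bern; split; [apply Pm_nonneg|apply HP1]].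
  assert (0 <= INR d) by apply pos_INR.
  assert (INR d * (1 - Pm lam Lam m) <= INR d * (e / (INR d + 1))) by (apply Rmult_le_compat_l; lra).
  assert (INR d * (e / (INR d + 1)) < e).
  { apply (Rmult_lt_reg_r (INR d + 1)); auto. unfold Rdiv.
    replace (INR d * (e * / (INR d + 1)) * (INR d + 1)) with (INR d * e) by (field; lra). nra. }
  lra.
Qed.

Lemma tail_conv n : infinite_sum (fun j => mu (n + 1 + j)%nat) (1 - Ssum mu n).
Proof.
  intros e He. destruct (Ssum_total e He) as [K HK]. exists K. intros k Hk.
  rewrite sum_f_sumL. unfold R_dist.
  assert (E : sumL mu (seq (n + 1) (S k)) = Ssum mu (n + S k) - Ssum mu n).
  { rewrite Ssum_split. replace (n + 1)%nat with (S n) by lia. lra. }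
  rewrite E. assert (1 - e < Ssum mu (n + S k)) by (apply HK; lia).
  pose proof (Ssum_le1 (n + S k)). apply Rabs_def1; lra.
Qed.

Lemma tail_le_lower n eps : tail_le mu n eps -> 1 - eps ^ 2 <= Ssum mu n.
Proof. intros [T [HT HTe]]. rewrite (uniqueness_sum _ _ _ HT (tail_conv n)) in HTe. lra. Qed.

Lemma tail_le_upper n eps : 1 - Ssum mu n <= eps ^ 2 -> tail_le mu n eps.
Proof. intros H. exists (1 - Ssum mu n). split; auto. apply tail_conv. Qed.

Lemma mu_anti a b : (1 <= a <= b)%nat -> mu b <= mu a.
Proof. destruct Hs as [sg [Hv [Hi [Hsu [Hm Hmo]]]]]. intros [H1 H2].
  induction H2; [lra|]. eapply Rle_trans; [apply Hmo; lia|]. apply IHle; lia. Qed.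

Lemma rearr n : forall J, NoDup J -> Forall (fun k => (1 <= k)%nat) J -> length J = n ->
  sumL mu J <= Ssum mu n.
Proof.
  induction n as [|n IH]; intros J HJ HF Hl.
  - destruct J; simpl in Hl; [|lia]. unfold Ssum; simpl; lra.
  - assert (Hex : exists j, In j J /\ (S n <= j)%nat).
    { destruct (Forall_dec (fun k => k <= n)%nat (fun k => Compare_dec.le_dec k n) J) as [Hle|Hn].
      - exfalso. assert (incl J (seq 1 n)).
        { intros x Hx. rewrite Forall_forall in *. apply in_seq. specialize (Hle x Hx). specialize (HF x Hx). lia. }
        pose proof (NoDup_incl_length HJ H). rewrite length_seq in H0. lia.
      - apply neg_Forall_Exists_neg in Hn. 2:{ intros x; apply Compare_dec.le_dec. }
        apply Exists_exists in Hn. destruct Hn as [j [Hj1 Hj2]]. exists j; split; auto; lia. }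
    destruct Hex as [j [Hj Hjn]]. destruct (in_split _ _ Hj) as [l1 [l2 ->]].
    assert (sumL mu (l1 ++ l2) <= Ssum mu n).
    { apply IH. eapply NoDup_remove_1; eauto.
      rewrite Forall_forall in *. intros x Hx. apply HF. apply in_app_or in Hx; apply in_or_app; simpl; tauto.
      rewrite length_app in *. simpl in Hl. lia. }
    assert (mu j <= mu (S n)) by (apply mu_anti; lia).
    rewrite Ssum_S. rewrite sumL_app in *. simpl. lra.
Qed.

Lemma upper_N m eps : 1 - eps ^ 2 <= Pm lam Lam m ^ d -> tail_le mu (m ^ d) eps.
Proof.
  intros H. apply tail_le_upper.
  destruct Hs as [sg [Hv [Hi [Hsu [Hm Hmo]]]]].
  assert (Hc : forall B : list (list nat), NoDup B -> (forall t, In t B -> valid_index d t) ->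
     exists J, NoDup J /\ Forall (fun k => (1 <= k)%nat) J /\ length J = length B /\ map sg J = B).
  { induction B as [|b B IH]; intros HN HB. - exists []; repeat split; auto; constructor.
    - inversion HN as [|b' B' Hnb HNB]; subst. destruct IH as [J [HJ1 [HJ2 [HJ3 HJ4]]]]; auto. intros; apply HB; right; auto.
      destruct (Hsu b) as [k [Hk1 Hk2]]. apply HB; left; auto.
      exists (k :: J). split; [|split; [|split]]; simpl; auto; try congruence.
      constructor; auto. intros Hk. apply Hnb. rewrite <- HJ4. apply in_map_iff. exists k; auto. }
  destruct (Hc (box d m)) as [J [HJ1 [HJ2 [HJ3 HJ4]]]]. apply NoDup_box.
  { intros t Ht. apply In_box in Ht. destruct Ht as [Hl Hf]. split; auto.
    rewrite Forall_forall in *. intros x Hx. apply Hf in Hx; lia. }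
  pose proof (rearr (m ^ d) J HJ1 HJ2 ltac:(rewrite HJ3, length_box; auto)).
  assert (E : sumL mu J = Pm lam Lam m ^ d).
  { unfold Pm. rewrite <- sum_box, <- HJ4, sumL_map. apply sumL_ext.
    intros x Hx. rewrite Forall_forall in HJ2. apply Hm. auto. }
  lra.
Qed.

Lemma lower_N n M : Ssum mu n <= Pm lam Lam M ^ d + INR n * (lam (S M) / Lam).
Proof.
  destruct Hg as [Hp0 [Hp1 [Hpm [HP1 HPl]]]]. destruct Hs as [sg [Hv [Hi [Hsu [Hm Hmo]]]]].
  set (P := fun k => if in_dec (list_eq_dec Nat.eq_dec) (sg k) (box d M) then true else false).
  assert (Hsplit : forall l, sumL mu l = sumL mu (filter P l) + sumL mu (filter (fun x => negb (P x)) l)).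
  { induction l; simpl; [lra|]. destruct (P a); simpl; rewrite IHl; lra. }
  unfold Ssum. rewrite Hsplit.
  assert (Hin : forall x, In x (seq 1 n) -> (1 <= x)%nat) by (intros x Hx; apply in_seq in Hx; lia).
  assert (H1 : sumL mu (filter P (seq 1 n)) <= Pm lam Lam M ^ d).
  { unfold Pm. rewrite <- sum_box.
    rewrite (sumL_ext mu (fun k => tensor_eig lam Lam (sg k))).
    2:{ intros x Hx. apply filter_In in Hx. apply Hm, Hin; tauto. }
    rewrite <- sumL_map. apply sumL_le_incl.
    - apply NoDup_map_NoDup_ForallPairs. intros x y Hx Hy Hxy. apply filter_In in Hx, Hy.
      apply Hi; auto; apply Hin; tauto. apply NoDup_filter, seq_NoDup.
    - intros t Ht. apply in_map_iff in Ht. destruct Ht as [k [<- Hk]]. apply filter_In in Hk.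
      destruct Hk as [_ Hk]. unfold P in Hk. destruct in_dec; [auto|discriminate].
    - intros x Hx; apply w_nonneg; auto. eapply valid_box; eauto. }
  assert (H2 : sumL mu (filter (fun x => negb (P x)) (seq 1 n)) <=
               sumL (fun _ => lam (S M) / Lam) (filter (fun x => negb (P x)) (seq 1 n))).
  { apply sumL_le. intros k Hk. apply filter_In in Hk. destruct Hk as [Hk HP].
    rewrite Hm by (apply Hin; auto). destruct (Hv k (Hin k Hk)) as [Hl Hvk].
    destruct (w_bound lam Lam Hp0 Hp1 Hpm M (sg k) Hvk) as [HF|HB]; auto.
    exfalso. unfold P in HP. destruct in_dec as [_|Hn]; [discriminate|]. apply Hn.
    apply In_box. split; auto. rewrite Forall_forall in *. intros x Hx. split; auto. }
  assert (H3 : forall c l, sumL (fun _ : nat => c) l = INR (length l) * c).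
  { intros c l; induction l; simpl length; [simpl; lra|]. rewrite S_INR. simpl. rewrite IHl. lra. }
  rewrite H3 in H2. pose proof (filter_length_le (fun x => negb (P x)) (seq 1 n)).
  rewrite length_seq in H. apply le_INR in H.
  assert (0 <= lam (S M) / Lam) by (apply Hp0; lia). nra.
Qed.

End S.

From Coquelicot Require Import Coquelicot.
Open Scope R_scope.

Definition Dn (s x : R) := x * ln x * Rpower (ln (ln x)) (1 + s).
Definition ff (s x : R) := / Dn s x.
Definition gg (s x : R) := / (s * Rpower (ln (ln x)) s).

Lemma ln4_gt1 : 1 < ln 4.
Proof. rewrite <- ln_exp at 1. apply ln_increasing. apply exp_pos.
  pose proof exp_le_3. lra. Qed.

Lemma lnln_pos x : 4 <= x -> 0 < ln (ln x).
Proof. intros Hx. rewrite <- ln_1. apply ln_increasing; [lra|].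
  eapply Rlt_le_trans. apply ln4_gt1. apply ln_le; lra. Qed.

Lemma ln_gt1 x : 4 <= x -> 1 < ln x.
Proof. intros Hx. eapply Rlt_le_trans. apply ln4_gt1. apply ln_le; lra. Qed.

Lemma Dn_pos s x : 0 < s -> 4 <= x -> 0 < Dn s x.
Proof. intros Hs Hx. unfold Dn. pose proof (ln_gt1 x Hx).
  apply Rmult_lt_0_compat. apply Rmult_lt_0_compat; lra. unfold Rpower; apply exp_pos. Qed.

Lemma Dn_mono s x y : 0 < s -> 4 <= x <= y -> Dn s x <= Dn s y.
Proof. intros Hs Hxy. unfold Dn. pose proof (ln_gt1 x ltac:(lra)).
  assert (ln x <= ln y) by (apply ln_le; lra).
  assert (Hl : ln (ln x) <= ln (ln y)) by (apply ln_le; lra).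
  pose proof (lnln_pos x ltac:(lra)).
  assert (Rpower (ln (ln x)) (1+s) <= Rpower (ln (ln y)) (1+s)) by (apply Rle_Rpower_l; lra).
  assert (0 < Rpower (ln (ln x)) (1+s)) by (unfold Rpower; apply exp_pos).
  apply Rmult_le_compat; try nra. Qed.

Lemma gg_deriv s x : 0 < s -> 4 <= x -> derivable_pt_lim (gg s) x (- ff s x).
Proof.
  intros Hs Hx. apply is_derive_Reals.
  pose proof (ln_gt1 x Hx). pose proof (lnln_pos x Hx).
  unfold gg, ff, Dn, Rpower.
  auto_derive.
  - repeat split; try lra. apply Rgt_not_eq. apply Rmult_lt_0_compat; [lra|apply exp_pos].
  - replace (exp ((1 + s) * ln (ln (ln x)))) with (ln (ln x) * exp (s * ln (ln (ln x)))).
    2:{ rewrite Rmult_plus_distr_r, Rmult_1_l, exp_plus, (exp_ln (ln (ln x))) by lra. reflexivity. }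
    assert (0 < exp (s * ln (ln (ln x)))) by apply exp_pos.
    field. repeat split; lra.
Qed.

Lemma tele s k : 0 < s -> 4 <= k -> ff s (k + 1) <= gg s k - gg s (k + 1) <= ff s k.
Proof.
  intros Hs Hk.
  destruct (MVT_cor2 (gg s) (fun x => - ff s x) k (k + 1) ltac:(lra)) as [c [Hc1 Hc2]].
  { intros c Hc. apply gg_deriv; lra. }
  assert (E : gg s k - gg s (k + 1) = ff s c) by (replace (k + 1 - k) with 1 in Hc1 by ring; lra).
  rewrite E. unfold ff. split; apply Rinv_le_contravar; try (apply Dn_pos; lra);
  apply Dn_mono; lra.
Qed.

Lemma INR_ge4 k : (4 <= k)%nat -> 4 <= INR k.
Proof. intros H. apply le_INR in H. replace (INR 4) with 4 in H by (simpl; lra). auto. Qed.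

Lemma nat_above X : exists n : nat, X <= INR n.
Proof. destruct (INR_archimed 1 X) as [n Hn]; [lra|]. exists n. lra. Qed.

Section E.
Variables (lam : nat -> R) (Lam beta s : R).
Hypotheses (Hnonneg : forall k, (1 <= k)%nat -> 0 <= lam k)
  (Hdec : forall k, (1 <= k)%nat -> lam (S k) <= lam k)
  (Hpos1 : 0 < lam 1%nat)
  (HLam : infinite_sum (fun k => lam (S k)) Lam)
  (Hbeta : 0 < beta) (Hs : 0 < s)
  (Hasym : Un_cv (fun k => (lam k / Lam) /
             (beta / (INR k * ln (INR k) * Rpower (ln (ln (INR k))) (1 + s)))) 1).

Let p k := lam k / Lam.

Lemma Lam_pos : 0 < Lam.
Proof. assert (lam 1%nat <= Lam); [|lra].
  apply (sum_incr (fun k => lam (S k)) 0 Lam HLam). intros n; apply Hnonneg; lia. Qed.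

Lemma Pm_S n : Pm lam Lam (S n) = Pm lam Lam n + p (S n).
Proof. apply Ssum_S. Qed.

Lemma Pm_eq n : Pm lam Lam (S n) = sum_f_R0 (fun k => lam (S k)) n / Lam.
Proof.
  unfold Pm. change (fun k => lam (S k)) with (fun j => lam (1 + j)%nat). rewrite (sum_f_sumL lam 1 n).
  unfold Rdiv. rewrite Rmult_comm, <- sumL_scal. apply sumL_ext. intros; lra. Qed.

Lemma Pm_le1 m : Pm lam Lam m <= 1.
Proof. pose proof Lam_pos. destruct m. unfold Pm; simpl; lra.
  rewrite Pm_eq. assert (sum_f_R0 (fun k => lam (S k)) m <= Lam); [|
  apply (Rmult_le_reg_r Lam); auto; unfold Rdiv; rewrite Rmult_assoc, Rinv_l; lra].
  apply (sum_incr (fun k => lam (S k)) m Lam HLam). intros n; apply Hnonneg; lia. Qed.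

Lemma Pm_mono m j : Pm lam Lam m <= Pm lam Lam (m + j).
Proof. pose proof Lam_pos. induction j. rewrite Nat.add_0_r; lra.
  rewrite Nat.add_succ_r, Pm_S. assert (0 <= p (S (m + j))); [|lra].
  unfold p. apply Rmult_le_pos; [apply Hnonneg; lia|left; apply Rinv_0_lt_compat; auto]. Qed.

Lemma Plim e : 0 < e -> exists m0, forall m, (m0 <= m)%nat -> 1 - e < Pm lam Lam m.
Proof.
  intros He. pose proof Lam_pos. destruct (HLam (e * Lam)) as [K HK]. nra.
  exists (S K). intros m Hm. destruct m; [lia|]. rewrite Pm_eq.
  specialize (HK m ltac:(lia)). unfold R_dist in HK. apply Rabs_def2 in HK.
  apply (Rmult_lt_reg_r Lam); auto. unfold Rdiv; rewrite Rmult_assoc, Rinv_l by lra. nra.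
Qed.

Lemma p_anti a b : (1 <= a <= b)%nat -> p b <= p a.
Proof. pose proof Lam_pos. intros [H1 H2]. induction H2; [lra|].
  eapply Rle_trans; [|apply IHle; lia]. unfold p, Rdiv. apply Rmult_le_compat_r.
  left; apply Rinv_0_lt_compat; auto. apply Hdec; lia. Qed.

Lemma p_nonneg k : (1 <= k)%nat -> 0 <= p k.
Proof. pose proof Lam_pos. intros; unfold p; apply Rmult_le_pos; [apply Hnonneg; lia|left; apply Rinv_0_lt_compat; auto]. Qed.

Lemma p_small m : (1 <= m)%nat -> INR m * p m <= 1.
Proof.
  intros Hm. eapply Rle_trans; [|apply (Pm_le1 m)]. unfold Pm.
  assert (H3 : forall c l, sumL (fun _ : nat => c) l = INR (length l) * c).
  { intros c l; induction l; simpl length; [simpl; lra|]. rewrite S_INR. simpl. rewrite IHl. lra. }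
  rewrite <- (length_seq m 1) at 1. rewrite <- H3. apply sumL_le.
  intros x Hx. apply in_seq in Hx. apply p_anti. lia. Qed.

Lemma p_le_inv m : (1 <= m)%nat -> p m <= / INR m.
Proof. intros Hm. pose proof (p_small m Hm). assert (0 < INR m) by (apply lt_0_INR; lia).
  apply (Rmult_le_reg_l (INR m)); auto. rewrite Rinv_r; lra. Qed.

Lemma pgood_ok : pgood lam Lam.
Proof.
  split; [|split; [|split; [|split]]].
  - apply p_nonneg.
  - intros k Hk. pose proof (p_small k Hk). pose proof (p_nonneg k Hk).
    assert (1 <= INR k) by (apply (le_INR 1); auto). fold (p k). nra.
  - apply p_anti.
  - apply Pm_le1.
  - intros e He. destruct (Plim e He) as [m0 Hm0]. exists m0; apply Hm0; lia.
Qed.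

Lemma sandwich eta : 0 < eta -> exists K0, (4 <= K0)%nat /\ forall k, (K0 <= k)%nat ->
  (1 - eta) * beta * ff s (INR k) <= p k <= (1 + eta) * beta * ff s (INR k).
Proof.
  intros He. destruct (Hasym eta He) as [K HK]. exists (Nat.max K 4). split; [lia|].
  intros k Hk. specialize (HK k ltac:(lia)). unfold R_dist in HK. apply Rabs_def2 in HK.
  assert (H4 : 4 <= INR k) by (apply INR_ge4; lia).
  pose proof (Dn_pos s (INR k) Hs H4).
  assert (Hf : 0 < ff s (INR k)) by (unfold ff; apply Rinv_0_lt_compat; auto).
  fold (Dn s (INR k)) in HK. fold (p k) in HK.
  assert (E : beta / Dn s (INR k) = beta * ff s (INR k)) by (unfold ff; field; lra).
  rewrite E in HK. set (q := beta * ff s (INR k)) in *.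
  assert (0 < q) by (unfold q; nra).
  assert (E2 : p k / q = p k * / q) by reflexivity. rewrite E2 in HK.
  assert (Ep : p k = (p k * / q) * q) by (field; lra).
  replace ((1 - eta) * beta * ff s (INR k)) with ((1 - eta) * q) by (unfold q; ring).
  replace ((1 + eta) * beta * ff s (INR k)) with ((1 + eta) * q) by (unfold q; ring).
  set (r := p k * / q) in *. rewrite Ep. destruct HK. split; nra.
Qed.

Lemma gg_pos x : 4 <= x -> 0 < gg s x.
Proof. intros; unfold gg. apply Rinv_0_lt_compat. apply Rmult_lt_0_compat; auto.
  unfold Rpower; apply exp_pos. Qed.

Lemma gg_small th : 0 < th -> exists X, 4 <= X /\ forall x, X <= x -> gg s x <= th.
Proof.
  intros Hth. set (Y := Rpower (/ (s * th)) (/ s)).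
  assert (HY : 0 < Y) by (unfold Y, Rpower; apply exp_pos).
  exists (Rmax 4 (exp (exp Y))). split; [apply Rmax_l|]. intros x Hx.
  assert (H4 : 4 <= x) by (eapply Rle_trans; [apply Rmax_l|apply Hx]).
  assert (Hx2 : exp (exp Y) <= x) by (eapply Rle_trans; [apply Rmax_r|apply Hx]).
  assert (H1 : exp Y <= ln x) by (rewrite <- (ln_exp (exp Y)); apply ln_le; auto; apply exp_pos).
  assert (H2 : Y <= ln (ln x)) by (rewrite <- (ln_exp Y); apply ln_le; auto; apply exp_pos).
  assert (H3 : Rpower Y s <= Rpower (ln (ln x)) s) by (apply Rle_Rpower_l; lra).
  assert (E : Rpower Y s = / (s * th)).
  { unfold Y. rewrite Rpower_mult. rewrite Rinv_l by lra. apply Rpower_1.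
    apply Rinv_0_lt_compat; nra. }
  rewrite E in H3. unfold gg.
  replace th with (/ (s * / (s * th))) by (field; lra).
  apply Rinv_le_contravar. apply Rmult_lt_0_compat; auto. apply Rinv_0_lt_compat; nra.
  apply Rmult_le_compat_l; lra.
Qed.

Lemma tail_upper eta : 0 < eta -> exists K, (4 <= K)%nat /\ forall m, (K <= m)%nat ->
  1 - Pm lam Lam m <= (1 + eta) * beta * gg s (INR m).
Proof.
  intros He. destruct (sandwich eta He) as [K0 [HK0 HS]]. exists K0; split; auto.
  intros m Hm.
  assert (Hj : forall j, Pm lam Lam (m + j) - Pm lam Lam m <=
                   (1 + eta) * beta * (gg s (INR m) - gg s (INR (m + j)))).
  { induction j. rewrite Nat.add_0_r. lra.
    rewrite Nat.add_succ_r, Pm_S.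
    assert (H4 : 4 <= INR (m + j)) by (apply INR_ge4; lia).
    destruct (tele s (INR (m + j)) Hs H4) as [T1 T2].
    rewrite <- S_INR in T1, T2. destruct (HS (S (m + j)) ltac:(lia)) as [_ Hp].
    assert (0 < (1 + eta) * beta) by nra. fold (p (S (m + j))). nra. }
  destruct (Rle_lt_dec (1 - Pm lam Lam m) ((1 + eta) * beta * gg s (INR m))) as [Hle|Hlt]; auto.
  exfalso. set (gap := 1 - Pm lam Lam m - (1 + eta) * beta * gg s (INR m)).
  destruct (Plim gap ltac:(unfold gap; lra)) as [m0 Hm0].
  specialize (Hm0 (m + m0)%nat ltac:(lia)). specialize (Hj m0).
  assert (0 < gg s (INR (m + m0))) by (apply gg_pos, INR_ge4; lia).
  assert (0 < (1 + eta) * beta) by nra. unfold gap in Hm0. nra.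
Qed.

Lemma tail_lower eta : 0 < eta < 1 -> exists K, (4 <= K)%nat /\ forall m, (K <= m)%nat ->
  (1 - eta) * beta * gg s (INR (S m)) <= 1 - Pm lam Lam m.
Proof.
  intros He. destruct (sandwich eta ltac:(lra)) as [K0 [HK0 HS]]. exists K0; split; auto.
  intros m Hm.
  assert (Hj : forall j, (1 - eta) * beta * (gg s (INR (S m)) - gg s (INR (S (m + j))))
                   <= Pm lam Lam (m + j) - Pm lam Lam m).
  { induction j. rewrite Nat.add_0_r. lra.
    rewrite Nat.add_succ_r, Pm_S.
    assert (H4 : 4 <= INR (S (m + j))) by (apply INR_ge4; lia).
    destruct (tele s (INR (S (m + j))) Hs H4) as [T1 T2].
    rewrite <- S_INR in T1, T2. destruct (HS (S (m + j)) ltac:(lia)) as [Hp _].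
    assert (0 < (1 - eta) * beta) by nra. fold (p (S (m + j))). nra. }
  destruct (Rle_lt_dec ((1 - eta) * beta * gg s (INR (S m))) (1 - Pm lam Lam m)) as [Hle|Hlt]; auto.
  exfalso. assert (Hc : 0 < (1 - eta) * beta) by nra.
  set (gap := ((1 - eta) * beta * gg s (INR (S m)) - (1 - Pm lam Lam m)) / (2 * ((1 - eta) * beta))).
  assert (Hgap : 0 < gap) by (unfold gap; apply Rdiv_lt_0_compat; lra).
  destruct (gg_small gap Hgap) as [X [HX4 HX]].
  destruct (nat_above X) as [j Hj'].
  specialize (Hj j). assert (HXj : X <= INR (S (m + j))).
  { eapply Rle_trans; [apply Hj'|]. apply le_INR; lia. }
  specialize (HX _ HXj). pose proof (Pm_le1 (m + j)).
  assert (E : 2 * ((1 - eta) * beta * gap) = (1 - eta) * beta * gg s (INR (S m)) - (1 - Pm lam Lam m))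
    by (unfold gap; field; lra).
  assert ((1 - eta) * beta * gg s (INR (S (m + j))) <= (1 - eta) * beta * gap) by (apply Rmult_le_compat_l; lra).
  lra.
Qed.

End E.

Lemma floor_ex X : 0 <= X -> exists n : nat, X <= INR n <= X + 1.
Proof.
  intros HX. destruct (nat_above X) as [k Hk]. revert Hk. induction k; intros Hk.
  - exists O. simpl in *. lra.
  - destruct (Rle_lt_dec X (INR k)) as [H|H]; auto.
    exists (S k). rewrite S_INR in *. lra.
Qed.

Lemma ln_nonpos x : x <= 0 -> ln x = 0.
Proof. intros H. unfold ln. destruct (Rlt_dec 0 x) as [h|h]; [exfalso; lra|reflexivity]. Qed.

Lemma ln2_lt1 : ln 2 < 1.
Proof. assert (ln 2 < ln (exp 1)); [|rewrite ln_exp in H; auto]. apply ln_increasing; [lra|].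
  pose proof (exp_ineq1 1 ltac:(lra)). lra. Qed.

Lemma ln2_pos : 0 < ln 2.
Proof. rewrite <- ln_1. apply ln_increasing; lra. Qed.

Lemma exp_gt x : x < exp x.
Proof. pose proof (exp_ineq1_le x). lra. Qed.

Lemma ln_ge_1m y : 0 < y -> 1 - / y <= ln y.
Proof. intros Hy. pose proof (exp_ineq1_le (ln (/ y))). rewrite exp_ln in H.
  rewrite ln_Rinv in H; lra. apply Rinv_0_lt_compat; auto. Qed.

Lemma lnlin A Cc Bb : 0 <= A -> 0 < Bb -> exists Lam0, 0 < Lam0 /\
  forall L, Lam0 <= L -> A * ln L + Cc < Bb * L.
Proof.
  intros HA HB. set (K := (2 * A + Rabs Cc + 1) / Bb).
  assert (HK : 0 < K) by (unfold K; apply Rdiv_lt_0_compat; auto; pose proof (Rabs_pos Cc); lra).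
  exists (K * K + 1). split; [nra|]. intros L HL.
  assert (HL0 : 0 < L) by nra.
  pose proof (sqrt_lt_R0 L HL0) as Hsq. pose proof (sqrt_sqrt L ltac:(lra)) as Hss.
  assert (Hln : ln L < 2 * sqrt L).
  { rewrite <- Hss at 1. rewrite ln_mult by auto. pose proof (exp_ineq1_le (ln (sqrt L))).
    rewrite exp_ln in H by auto. lra. }
  assert (Hs1 : K <= sqrt L).
  { destruct (Rle_lt_dec K (sqrt L)) as [h|h]; auto.
    assert (sqrt L * sqrt L < K * K) by (apply Rmult_le_0_lt_compat; lra). lra. }
  assert (Hs2 : 1 <= sqrt L).
  { destruct (Rle_lt_dec 1 (sqrt L)) as [h|h]; auto.
    assert (sqrt L * sqrt L < 1 * 1) by (apply Rmult_le_0_lt_compat; lra). nra. }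
  assert (Bb * K = 2 * A + Rabs Cc + 1) by (unfold K; field; lra).
  assert (Bb * L = (Bb * sqrt L) * sqrt L) by (rewrite <- Hss at 1; ring).
  assert (Bb * sqrt L >= 2 * A + Rabs Cc + 1) by nra.
  pose proof (Rle_abs Cc). pose proof (Rabs_pos Cc). nra.
Qed.

Section F.
Variables (lam : nat -> R) (Lam beta s eps : R).
Hypotheses (Hnonneg : forall k, (1 <= k)%nat -> 0 <= lam k)
  (Hdec : forall k, (1 <= k)%nat -> lam (S k) <= lam k)
  (Hpos1 : 0 < lam 1%nat)
  (HLam : infinite_sum (fun k => lam (S k)) Lam)
  (Hbeta : 0 < beta) (Hs : 0 < s)
  (Hasym : Un_cv (fun k => (lam k / Lam) /
             (beta / (INR k * ln (INR k) * Rpower (ln (ln (INR k))) (1 + s)))) 1)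
  (Heps : 0 < eps < 1)
  (N : nat -> nat)
  (HN : forall d, (1 <= d)%nat -> is_nX lam Lam d eps (N d)).

Let a := - ln (1 - eps ^ 2).
Let c := beta / (s * a).
Let Lf d := Rpower (beta * INR d / (s * Rabs (ln (1 - eps ^ 2)))) (1 / s).

Lemma a_facts : 0 < a /\ Rabs (ln (1 - eps ^ 2)) = a /\ exp (- a) = 1 - eps ^ 2.
Proof.
  assert (H1 : 0 < 1 - eps ^ 2 < 1) by (simpl; nra).
  assert (H2 : ln (1 - eps ^ 2) < 0) by (rewrite <- ln_1; apply ln_increasing; lra).
  unfold a. split; [lra|split]. rewrite Rabs_left; auto.
  rewrite Ropp_involutive, exp_ln; lra.
Qed.

Lemma c_pos : 0 < c.
Proof. destruct a_facts as [Ha _]. unfold c. apply Rdiv_lt_0_compat; nra. Qed.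

Lemma Lf_pos d : 0 < Lf d.
Proof. unfold Lf, Rpower. apply exp_pos. Qed.

Lemma Lf_pow d : (1 <= d)%nat -> Rpower (Lf d) s = c * INR d.
Proof.
  intros Hd. destruct a_facts as [Ha [Hab _]]. unfold Lf. rewrite Hab.
  assert (0 < INR d) by (apply lt_0_INR; lia).
  rewrite Rpower_mult. replace (1 / s * s) with 1 by (field; lra).
  rewrite Rpower_1. unfold c; field; lra. apply Rdiv_lt_0_compat; nra.
Qed.

Lemma Lf_large Lm : 0 < Lm -> exists D, (1 <= D)%nat /\ forall d, (D <= d)%nat -> Lm <= Lf d.
Proof.
  intros HL. pose proof c_pos. destruct (nat_above (Rpower Lm s / c)) as [D HD].
  exists (S D). split; [lia|]. intros d Hd.
  assert (HD' : Rpower Lm s <= c * INR d).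
  { assert (INR D <= INR d) by (apply le_INR; lia).
    assert (Rpower Lm s / c * c = Rpower Lm s) by (field; lra). nra. }
  assert (HP : 0 < Rpower Lm s) by (unfold Rpower; apply exp_pos).
  rewrite <- (Lf_pow d) in HD' by lia.
  assert (E1 : Rpower (Rpower Lm s) (/ s) = Lm).
  { rewrite Rpower_mult, Rinv_r, Rpower_1; auto; lra. }
  assert (E2 : Rpower (Rpower (Lf d) s) (/ s) = Lf d).
  { rewrite Rpower_mult, Rinv_r, Rpower_1; auto. apply Lf_pos. lra. }
  rewrite <- E1, <- E2. apply Rle_Rpower_l. left; apply Rinv_0_lt_compat; auto. split; auto.
Qed.

Lemma ln_d d : (1 <= d)%nat -> ln (INR d) = s * ln (Lf d) - ln c.
Proof.
  intros Hd. pose proof c_pos. pose proof (Lf_pos d).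
  replace (INR d) with (Rpower (Lf d) s / c) by (rewrite Lf_pow by auto; field; lra).
  rewrite ln_div, ln_Rpower; auto. unfold Rpower; apply exp_pos.
Qed.

Lemma UB d m : (1 <= d)%nat -> 1 - eps ^ 2 <= Pm lam Lam m ^ d -> INR (N d) <= INR m ^ d.
Proof.
  intros Hd H. destruct (HN d Hd) as [mu [Hst [Ht Hmin]]].
  pose proof (pgood_ok lam Lam Hnonneg Hdec Hpos1 HLam) as Hg.
  pose proof (upper_N lam Lam d mu Hg Hst m eps H) as Hu.
  rewrite <- pow_INR. apply le_INR. apply Hmin. auto.
Qed.

Lemma LB d M : (1 <= d)%nat ->
  1 - eps ^ 2 <= Pm lam Lam M ^ d + INR (N d) * (lam (S M) / Lam).
Proof.
  intros Hd. destruct (HN d Hd) as [mu [Hst [Ht Hmin]]].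
  pose proof (pgood_ok lam Lam Hnonneg Hdec Hpos1 HLam) as Hg.
  pose proof (tail_le_lower lam Lam d mu Hg Hst _ _ Ht).
  pose proof (lower_N lam Lam d mu Hg Hst (N d) M). lra.
Qed.


Lemma upper_ev dl : 0 < dl -> exists Lm, 0 < Lm /\ forall d, (1 <= d)%nat -> Lm <= Lf d ->
  ln (ln (INR (N d))) <= ln (INR d) + ln 2 + (1 + dl) * Lf d.
Proof.
  intros Hdl. destruct a_facts as [Ha [_ Hea]]. pose proof c_pos as Hc.
  set (th := Rpower (1 + dl) s).
  assert (Hth : 1 < th).
  { unfold th, Rpower. assert (0 < ln (1 + dl)) by (rewrite <- ln_1; apply ln_increasing; lra).
    assert (exp 0 < exp (s * ln (1 + dl))) by (apply exp_increasing; nra). rewrite exp_0 in H0. lra. }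
  set (eta := Rmin (1/2) ((th - 1) / 3)).
  assert (He1 : 0 < eta) by (unfold eta; apply Rmin_glb_lt; lra).
  assert (He2 : eta <= 1/2) by apply Rmin_l.
  assert (He3 : eta <= (th - 1) / 3) by apply Rmin_r.
  destruct (tail_upper lam Lam beta s Hnonneg Hpos1 HLam Hbeta Hs Hasym eta He1) as [K1 [HK1 HT1]].
  destruct (Plim lam Lam Hnonneg Hpos1 HLam (eta / (1 + eta))) as [m0 Hm0].
  { apply Rdiv_lt_0_compat; lra. }
  exists (INR (K1 + m0 + 4) + 1). split. { pose proof (pos_INR (K1 + m0 + 4)); lra. }
  intros d Hd HL. set (L := Lf d) in *. assert (HL0 : 0 < L) by apply Lf_pos.
  assert (Hdpos : 0 < INR d) by (apply lt_0_INR; lia).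
  set (E1 := exp ((1 + dl) * L)). set (X := exp E1).
  assert (HE1 : (1 + dl) * L < E1) by apply exp_gt.
  assert (HX : E1 < X) by apply exp_gt.
  assert (HE1p : 0 < E1) by apply exp_pos.
  destruct (floor_ex X) as [m [Hm1 Hm2]]. lra.
  assert (Hmn : (K1 + m0 + 4 < m)%nat). { apply INR_lt. nra. }
  assert (Hm4 : 4 <= INR m) by (apply INR_ge4; lia).
  assert (Hlnm : E1 <= ln (INR m)). { unfold X in Hm1. rewrite <- (ln_exp E1). apply ln_le; auto. apply exp_pos. }
  assert (Hu : (1 + dl) * L <= ln (ln (INR m))).
  { rewrite <- (ln_exp ((1 + dl) * L)). apply ln_le; auto. }
  assert (HRu : th * (c * INR d) <= Rpower (ln (ln (INR m))) s).
  { rewrite <- (Lf_pow d Hd). fold L. unfold th. rewrite Rpower_mult_distr by lra.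
    apply Rle_Rpower_l; nra. }
  assert (Hgg : gg s (INR m) <= / (s * (th * (c * INR d)))).
  { unfold gg. apply Rinv_le_contravar. apply Rmult_lt_0_compat; auto. apply Rmult_lt_0_compat; nra.
    apply Rmult_le_compat_l; lra. }
  set (P := Pm lam Lam m). set (F := 1 - P).
  assert (HF1 : F <= (1 + eta) * beta * gg s (INR m)) by (apply HT1; lia).
  assert (HF2 : F <= (1 + eta) * a / (th * INR d)).
  { eapply Rle_trans; [apply HF1|].
    replace ((1 + eta) * a / (th * INR d)) with ((1 + eta) * beta * / (s * (th * (c * INR d)))).
    apply Rmult_le_compat_l; nra. unfold c; field; repeat split; lra. }
  assert (HF3 : 1 - eta / (1 + eta) < P) by (apply Hm0; lia).
  assert (HF4 : P <= 1) by apply (Pm_le1 lam Lam Hnonneg Hpos1 HLam).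
  assert (HP0 : 0 < P). { assert (eta / (1 + eta) < 1) by (apply Rmult_lt_reg_r with (1 + eta); [lra|]; unfold Rdiv; rewrite Rmult_assoc, Rinv_l; lra). lra. }
  assert (HinvP : / P <= 1 + eta).
  { replace (1 + eta) with (/ (/ (1 + eta))) by (field; lra). apply Rinv_le_contravar.
    apply Rinv_0_lt_compat; lra. replace (/ (1 + eta)) with (1 - eta / (1 + eta)) by (field; lra). lra. }
  assert (Hln : - ((1 + eta) * F) <= ln P).
  { eapply Rle_trans; [|apply ln_ge_1m; auto].
    replace (1 - / P) with (- (F * / P)) by (unfold F; field; lra).
    apply Ropp_le_contravar. replace ((1 + eta) * F) with (F * (1 + eta)) by ring.
    apply Rmult_le_compat_l; unfold F; lra. }
  assert (HdF : INR d * F <= (1 + eta) * a / th).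
  { replace ((1 + eta) * a / th) with (INR d * ((1 + eta) * a / (th * INR d))) by (field; lra).
    apply Rmult_le_compat_l; lra. }
  assert (Hsq : (1 + eta) * (1 + eta) <= th) by nra.
  assert (Hfin : - a <= INR d * ln P).
  { assert (INR d * - ((1 + eta) * F) <= INR d * ln P) by (apply Rmult_le_compat_l; lra).
    assert ((1 + eta) * (INR d * F) <= (1 + eta) * ((1 + eta) * a / th)) by (apply Rmult_le_compat_l; lra).
    assert ((1 + eta) * ((1 + eta) * a / th) <= a).
    { apply (Rmult_le_reg_r th); [lra|]. replace ((1 + eta) * ((1 + eta) * a / th) * th) with ((1 + eta) * (1 + eta) * a) by (field; lra). nra. }
    nra. }
  assert (HPd : 1 - eps ^ 2 <= P ^ d).
  { rewrite <- Hea, <- Rpower_pow by auto. unfold Rpower. destruct (Req_dec (-a) (INR d * ln P)) as [h|h].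
    rewrite h; lra. left; apply exp_increasing; lra. }
  pose proof (UB d m Hd HPd) as HNd.
  assert (Hrhs : 0 <= ln (INR d) + ln 2 + (1 + dl) * L).
  { assert (0 <= ln (INR d)) by (rewrite <- ln_1; apply ln_le; [lra|apply (le_INR 1); auto]).
    pose proof ln2_pos. nra. }
  destruct (Rle_lt_dec (ln (INR (N d))) 0) as [h|h].
  { rewrite ln_nonpos; auto. }
  assert (HN0 : 0 < INR (N d)).
  { destruct (Rle_lt_dec (INR (N d)) 0) as [h2|h2]; auto. rewrite ln_nonpos in h; lra. }
  assert (Hm0' : 0 < INR m) by lra.
  assert (H1 : ln (INR (N d)) <= INR d * ln (INR m)).
  { rewrite <- ln_pow by auto. apply ln_le; auto. }
  assert (Hlm0 : 0 < ln (INR m)) by lra.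
  assert (H2 : ln (ln (INR (N d))) <= ln (INR d) + ln (ln (INR m))).
  { rewrite <- ln_mult by auto. apply ln_le; auto. }
  assert (H3 : ln (INR m) <= ln 2 + E1).
  { assert (ln (INR m) <= ln (2 * X)) by (apply ln_le; lra).
    rewrite ln_mult in H by (try lra; apply exp_pos). unfold X in H. rewrite ln_exp in H. lra. }
  assert (H4 : ln (ln (INR m)) <= ln 2 + (1 + dl) * L).
  { assert (ln (ln (INR m)) <= ln (2 * E1)).
    { apply ln_le; auto. pose proof ln2_lt1. assert (1 <= E1).
      { unfold E1. assert (exp 0 < exp ((1 + dl) * L)) by (apply exp_increasing; nra).
        rewrite exp_0 in H0. lra. } lra. }
    rewrite ln_mult in H by lra. unfold E1 in H. rewrite ln_exp in H. lra. }
  lra.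
Qed.

Lemma lower_ev dl : 0 < dl <= 1/2 -> exists Lm, 0 < Lm /\ forall d, (1 <= d)%nat -> Lm <= Lf d ->
  (1 - dl) * Lf d - ln 2 <= ln (ln (INR (N d))).
Proof.
  intros Hdl. destruct a_facts as [Ha [_ Hea]]. pose proof c_pos as Hc.
  pose proof (pgood_ok lam Lam Hnonneg Hdec Hpos1 HLam) as Hg.
  set (ph := Rpower (1 - dl) s).
  assert (Hph : 0 < ph < 1).
  { unfold ph, Rpower. split; [apply exp_pos|].
    assert (ln (1 - dl) < 0) by (rewrite <- ln_1; apply ln_increasing; lra).
    assert (exp (s * ln (1 - dl)) < exp 0) by (apply exp_increasing; nra). rewrite exp_0 in H0. lra. }
  set (eta := (1 - ph) / 2). set (ga := (1 - eta) / ph).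
  assert (Hga : 1 < ga).
  { unfold ga, eta. apply (Rmult_lt_reg_r ph); [lra|].
    replace ((1 - (1 - ph) / 2) / ph * ph) with (1 - (1 - ph) / 2) by (field; lra). lra. }
  destruct (tail_lower lam Lam beta s Hnonneg Hpos1 HLam Hbeta Hs Hasym eta) as [K2 [HK2 HT2]].
  { unfold eta; lra. }
  set (ka := exp (- a) - exp (- (ga * a))).
  assert (Hka : 0 < ka < 1).
  { unfold ka. assert (exp (- (ga * a)) < exp (- a)) by (apply exp_increasing; nra).
    assert (exp (- a) < exp 0) by (apply exp_increasing; lra). rewrite exp_0 in H0.
    pose proof (exp_pos (- (ga * a))). lra. }
  set (Cc := ln 2 - ln ka).
  assert (HC : 0 < Cc).
  { unfold Cc. assert (ln ka < 0) by (rewrite <- ln_1; apply ln_increasing; lra). pose proof ln2_pos. lra. }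
  exists (4 * INR (K2 + 5) + 4 * Cc + 1). split. { pose proof (pos_INR (K2 + 5)); lra. }
  intros d Hd HL. set (L := Lf d) in *. assert (HL0 : 0 < L) by apply Lf_pos.
  assert (Hdpos : 0 < INR d) by (apply lt_0_INR; lia).
  pose proof (pos_INR (K2 + 5)) as HK5.
  set (E2 := exp ((1 - dl) * L)). set (X := exp E2).
  assert (HE2 : (1 - dl) * L < E2) by apply exp_gt.
  assert (HX : E2 < X) by apply exp_gt.
  assert (HE2p : 0 < E2) by apply exp_pos.
  destruct (floor_ex (X / 2)) as [n [Hn1 Hn2]]. lra.
  assert (Hnn : (K2 + 5 < n)%nat). { apply INR_lt. nra. }
  assert (Hn4 : 4 <= INR n) by (apply INR_ge4; lia).
  set (M := (n - 1)%nat). assert (HSM : S M = n) by (unfold M; lia).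
  assert (Hlnn : ln (INR n) <= E2).
  { unfold X in *. rewrite <- (ln_exp E2). apply ln_le; lra. }
  pose proof (ln_gt1 (INR n) Hn4) as Hln1.
  assert (Hu : ln (ln (INR n)) <= (1 - dl) * L).
  { rewrite <- (ln_exp ((1 - dl) * L)). fold E2. apply ln_le; lra. }
  pose proof (lnln_pos (INR n) Hn4) as Hu0.
  assert (HRu : Rpower (ln (ln (INR n))) s <= ph * (c * INR d)).
  { rewrite <- (Lf_pow d Hd). fold L. unfold ph. rewrite Rpower_mult_distr by lra.
    apply Rle_Rpower_l; lra. }
  assert (HRu0 : 0 < Rpower (ln (ln (INR n))) s) by (unfold Rpower; apply exp_pos).
  assert (Hgg : / (s * (ph * (c * INR d))) <= gg s (INR n)).
  { unfold gg. apply Rinv_le_contravar. apply Rmult_lt_0_compat; auto.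
    apply Rmult_le_compat_l; lra. }
  set (P := Pm lam Lam M). set (F := 1 - P).
  assert (HF1 : (1 - eta) * beta * gg s (INR (S M)) <= F) by (apply HT2; unfold M; lia).
  rewrite HSM in HF1.
  assert (HF2 : ga * a / INR d <= F).
  { eapply Rle_trans; [|apply HF1].
    replace (ga * a / INR d) with ((1 - eta) * beta * / (s * (ph * (c * INR d)))).
    apply Rmult_le_compat_l; [unfold eta; nra|auto]. unfold ga, c; field; repeat split; lra. }
  assert (HdF : ga * a <= INR d * F).
  { replace (ga * a) with (INR d * (ga * a / INR d)) by (field; lra). apply Rmult_le_compat_l; lra. }
  assert (HP0 : 0 <= P) by apply (Pm_nonneg lam Lam Hg).
  assert (HPe : P <= exp (- F)) by (pose proof (exp_ineq1_le (- F)); unfold F in *; lra).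
  assert (HPd : P ^ d <= exp (- (ga * a))).
  { eapply Rle_trans. apply pow_incr; split; [apply HP0|apply HPe].
    rewrite <- Rpower_pow by apply exp_pos. unfold Rpower. rewrite ln_exp.
    destruct (Req_dec (INR d * - F) (- (ga * a))) as [h|h]. rewrite h; lra.
    left; apply exp_increasing; lra. }
  pose proof (LB d M Hd) as HLB. rewrite <- Hea in HLB. fold P in HLB. rewrite HSM in HLB.
  pose proof (p_le_inv lam Lam Hnonneg Hdec Hpos1 HLam n ltac:(lia)) as Hpn. simpl in Hpn.
  assert (HN0 : 0 <= INR (N d)) by apply pos_INR.
  assert (Hn0 : 0 < INR n) by lra.
  assert (HNn : ka <= INR (N d) * / INR n).
  { assert (INR (N d) * (lam n / Lam) <= INR (N d) * / INR n) by (apply Rmult_le_compat_l; auto).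
    unfold ka. lra. }
  assert (HNk : ka * INR n <= INR (N d)).
  { apply (Rmult_le_compat_r (INR n)) in HNn; [|lra]. 
    replace (INR (N d) * / INR n * INR n) with (INR (N d)) in HNn by (field; lra). lra. }
  assert (HNpos : 0 < INR (N d)) by nra.
  assert (HlnN : E2 - Cc <= ln (INR (N d))).
  { assert (ln (ka * INR n) <= ln (INR (N d))) by (apply ln_le; [nra|auto]).
    rewrite ln_mult in H by lra.
    assert (ln (X / 2) <= ln (INR n)) by (apply ln_le; [unfold X; pose proof (exp_pos E2); lra|auto]).
    rewrite ln_div in H0 by (try lra; apply exp_pos). unfold X in H0. rewrite ln_exp in H0.
    unfold Cc. lra. }
  assert (HE2C : 2 * Cc <= E2) by nra.
  assert (H1 : ln (E2 / 2) <= ln (ln (INR (N d)))) by (apply ln_le; lra).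
  rewrite ln_div in H1 by lra. unfold E2 in H1. rewrite ln_exp in H1. lra.
Qed.

Lemma main_F : Un_cv (fun d => ln (ln (INR (N d))) / Lf d) 1.
Proof.
  intros tau Htau. set (dl := Rmin (1/2) (tau/2)).
  assert (Hd1 : 0 < dl) by (unfold dl; apply Rmin_glb_lt; lra).
  assert (Hd2 : dl <= 1/2) by apply Rmin_l.
  assert (Hd3 : dl <= tau/2) by apply Rmin_r.
  destruct (upper_ev dl Hd1) as [Lu [HLu Hu]].
  destruct (lower_ev dl ltac:(lra)) as [Ll [HLl Hl]].
  destruct (lnlin s (ln 2 - ln c) (tau / 2) ltac:(lra) ltac:(lra)) as [L3 [HL3 H3]].
  set (L4 := 4 / tau + 1).
  assert (HL4 : 0 < L4) by (unfold L4; assert (0 < 4 / tau) by (apply Rdiv_lt_0_compat; lra); lra).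
  set (Lm := Rmax (Rmax Lu Ll) (Rmax L3 L4)).
  assert (HLm : 0 < Lm) by (unfold Lm; eapply Rlt_le_trans; [apply HLu|]; eapply Rle_trans; [apply Rmax_l|apply Rmax_l]).
  destruct (Lf_large Lm HLm) as [D [HD1 HD]]. exists D. intros d Hd.
  assert (Hd' : (1 <= d)%nat) by lia.
  specialize (HD d Hd). set (L := Lf d) in *.
  assert (HLuL : Lu <= L) by (eapply Rle_trans; [|apply HD]; unfold Lm; eapply Rle_trans; [apply Rmax_l|apply Rmax_l]).
  assert (HLlL : Ll <= L) by (eapply Rle_trans; [|apply HD]; unfold Lm; eapply Rle_trans; [apply Rmax_r|apply Rmax_l]).
  assert (HL3L : L3 <= L) by (eapply Rle_trans; [|apply HD]; unfold Lm; eapply Rle_trans; [apply Rmax_l|apply Rmax_r]).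
  assert (HL4L : L4 <= L) by (eapply Rle_trans; [|apply HD]; unfold Lm; eapply Rle_trans; [apply Rmax_r|apply Rmax_r]).
  assert (HL0 : 0 < L) by apply Lf_pos.
  specialize (Hu d Hd' HLuL). specialize (Hl d Hd' HLlL). specialize (H3 L HL3L).
  rewrite (ln_d d Hd') in Hu. fold L in Hu.
  assert (Hln2 : ln 2 < tau / 2 * L).
  { pose proof ln2_lt1. assert (tau / 2 * L4 = 2 + tau / 2) by (unfold L4; field; lra).
    assert (tau / 2 * L4 <= tau / 2 * L) by (apply Rmult_le_compat_l; lra). lra. }
  set (x := ln (ln (INR (N d)))) in *.
  assert (dl * L <= tau / 2 * L) by (apply Rmult_le_compat_r; lra).
  change (Lf d) with L in Hl, Hu, H3.
  assert (Hup : x < (1 + tau) * L) by lra.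
  assert (Hlo : (1 - tau) * L < x) by lra.
  unfold R_dist. replace (x / L - 1) with ((x - L) / L) by (field; lra).
  apply Rabs_def1.
  - apply (Rmult_lt_reg_r L); auto. replace ((x - L) / L * L) with (x - L) by (field; lra). lra.
  - apply (Rmult_lt_reg_r L); auto. replace ((x - L) / L * L) with (x - L) by (field; lra). lra.
Qed.

End F.

Theorem proposition11
  (lam : nat -> R) (Lam beta s eps : R)
  (Hnonneg : forall k, (1 <= k)%nat -> 0 <= lam k)
  (Hdec : forall k, (1 <= k)%nat -> lam (S k) <= lam k)
  (Hpos1 : 0 < lam 1%nat)
  (HLam : infinite_sum (fun k => lam (S k)) Lam)
  (Hbeta : 0 < beta) (Hs : 0 < s)
  (Hasym : Un_cv (fun k => (lam k / Lam) /
             (beta / (INR k * ln (INR k) * Rpower (ln (ln (INR k))) (1 + s)))) 1)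
  (Heps : 0 < eps < 1)
  (N : nat -> nat)
  (HN : forall d, (1 <= d)%nat -> is_nX lam Lam d eps (N d)) :
  Un_cv (fun d => ln (ln (INR (N d))) /
           Rpower (beta * INR d / (s * Rabs (ln (1 - eps ^ 2)))) (1 / s)) 1.
Proof.
  exact (main_F lam Lam beta s eps Hnonneg Hdec Hpos1 HLam Hbeta Hs Hasym Heps N HN).
Qed.
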